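(* For every integer $r\ge 1$, the set $R_r$ is high above the set $L_r$.
   Context: Define finite sets $P_r\subset\mathbb{Z}^2$ for integers $r\ge 0$ recursively: $P_0:=\{(0,0)\}$; for $r\ge 1$, $L_r:=P_{r-1}$, $R_r:=\{(x+\delta_r,\,y+\delta_r'):(x,y)\in L_r\}$ and $P_r:=L_r\cup R_r$, where $\delta_r:=3\cdot 4^{r-1}$ and $\delta_r':=(3r+1)\cdot 4^{r-1}$. For finite point sets $X,Y$ in the plane, $X$ is said to be high above $Y$ if every line determined by two points of $X$ lies strictly above every point of $Y$, and every line determined by two points of $Y$ lies strictly below every point of $X$ (the conditions are vacuous when the respective set has fewer than two points). *)

(* Defs.v *)
From Stdlib Require Import ZArith List.
Open Scope Z_scope.

Definition point := (Z * Z)%type.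

Fixpoint P (r : nat) : list point :=
  match r with
  | O => (0, 0) :: nil
  | S r' =>
      let L := P r' in
      let d := 3 * 4 ^ Z.of_nat r' in
      let d' := (3 * Z.of_nat r + 1) * 4 ^ Z.of_nat r' in
      L ++ map (fun p => (fst p + d, snd p + d')) L
  end.

Definition L (r : nat) : list point := P (Nat.pred r).
Definition delta (r : nat) : Z := 3 * 4 ^ (Z.of_nat r - 1).
Definition delta' (r : nat) : Z := (3 * Z.of_nat r + 1) * 4 ^ (Z.of_nat r - 1).
Definition R (r : nat) : list point :=
  map (fun p => (fst p + delta r, snd p + delta' r)) (L r).

(* The line through distinct points a, b (non-vertical) lies strictly above q:
   the line's ordinate at abscissa q.x exceeds q.y.  A vertical line is never
   "above" a point (not needed here: all points involved have distinct x). *)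
Definition line_above (a b q : point) : Prop :=
  fst a <> fst b /\
  (fst b - fst a) * (snd q - snd a) * (fst b - fst a) <
  (snd b - snd a) * (fst q - fst a) * (fst b - fst a).

Definition line_below (a b q : point) : Prop :=
  fst a <> fst b /\
  (snd b - snd a) * (fst q - fst a) * (fst b - fst a) <
  (fst b - fst a) * (snd q - snd a) * (fst b - fst a).

Definition high_above (X Y : list point) : Prop :=
  (forall a b q, In a X -> In b X -> a <> b -> In q Y -> line_above a b q) /\
  (forall a b q, In a Y -> In b Y -> a <> b -> In q X -> line_below a b q).

(* Main.v *)
Require Import Defs.
From Stdlib Require Import ZArith List Lia.
Open Scope Z_scope.

Definition h (N:nat) (p:point) : Z := (Z.of_nat N + 1) * fst p - snd p.

Lemma P_S m : P (S m) = P m ++ map (fun p => (fst p + 3 * 4 ^ Z.of_nat m,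
   snd p + (3 * Z.of_nat (S m) + 1) * 4 ^ Z.of_nat m)) (P m).
Proof. reflexivity. Qed.

Lemma inv : forall N m, (m <= N)%nat -> forall p, In p (P m) ->
  0 <= fst p <= 4 ^ Z.of_nat m - 1 /\
  0 <= h N p <= 4 ^ Z.of_nat m * (Z.of_nat N - Z.of_nat m + 1) - (Z.of_nat N + 1).
Proof.
  intros N m; induction m as [|m IH]; intros Hm p Hp.
  - simpl in Hp. destruct Hp as [<-|[]]. unfold h; cbn [fst snd Z.of_nat]. rewrite Z.pow_0_r. lia.
  - rewrite P_S in Hp. rewrite Nat2Z.inj_succ in *. rewrite Z.pow_succ_r by lia.
    assert (He: 0 < 4 ^ Z.of_nat m) by (apply Z.pow_pos_nonneg; lia).
    set (e := 4 ^ Z.of_nat m) in *.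
    assert (HN : Z.of_nat m + 1 <= Z.of_nat N) by lia.
    set (zN := Z.of_nat N) in *. set (zm := Z.of_nat m) in *.
    apply in_app_or in Hp; destruct Hp as [Hp|Hp].
    + destruct (IH ltac:(lia) p Hp) as [H1 H2]. unfold h in *. fold zN in H2 |- *.
      split; [lia|]. nia.
    + apply in_map_iff in Hp. destruct Hp as [p0 [<- Hp0]].
      destruct (IH ltac:(lia) p0 Hp0) as [H1 H2]. unfold h in *. fold zN in H2 |- *.
      cbn [fst snd]. split; [lia|]. nia.
Qed.

Lemma mono : forall N m, (m <= N)%nat -> forall a b, In a (P m) -> In b (P m) ->
  (fst a < fst b -> h N a < h N b) /\ (fst a = fst b -> a = b).
Proof.
  intros N m; induction m as [|m IH]; intros Hm a b Ha Hb.
  - simpl in Ha, Hb. destruct Ha as [<-|[]]; destruct Hb as [<-|[]]. split; [cbn; lia| auto].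
  - assert (Hm' : (m <= N)%nat) by lia.
    pose proof (inv N m Hm') as Hinv.
    rewrite P_S in Ha, Hb. rewrite Nat2Z.inj_succ in *.
    assert (He: 0 < 4 ^ Z.of_nat m) by (apply Z.pow_pos_nonneg; lia).
    set (e := 4 ^ Z.of_nat m) in *.
    assert (HN : Z.of_nat m + 1 <= Z.of_nat N) by lia.
    unfold h in *.
    set (zN := Z.of_nat N) in *. set (zm := Z.of_nat m) in *.
    apply in_app_or in Ha; apply in_app_or in Hb.
    destruct Ha as [Ha|Ha]; destruct Hb as [Hb|Hb].
    + apply IH; auto.
    + apply in_map_iff in Hb. destruct Hb as [b0 [<- Hb0]].
      destruct (Hinv a Ha) as [H1 H2]. destruct (Hinv b0 Hb0) as [H3 H4].
      cbn [fst snd]. split; [intros _; nia | lia].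
    + apply in_map_iff in Ha. destruct Ha as [a0 [<- Ha0]].
      destruct (Hinv b Hb) as [H1 H2]. destruct (Hinv a0 Ha0) as [H3 H4].
      cbn [fst snd]. split; lia.
    + apply in_map_iff in Ha. destruct Ha as [a0 [<- Ha0]].
      apply in_map_iff in Hb. destruct Hb as [b0 [<- Hb0]].
      destruct (IH Hm' a0 b0 Ha0 Hb0) as [H1 H2].
      cbn [fst snd]. split.
      * intros Hx. assert (fst a0 < fst b0) by lia. specialize (H1 H). nia.
      * intros Hx. assert (fst a0 = fst b0) by lia. rewrite (H2 H). reflexivity.
Qed.

Lemma slope_sign N n a0 b0 : (n <= N)%nat -> In a0 (P n) -> In b0 (P n) -> a0 <> b0 ->
  fst a0 <> fst b0 /\
  0 < (fst b0 - fst a0) * ((Z.of_nat N + 1) * (fst b0 - fst a0) - (snd b0 - snd a0)).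
Proof.
  intros Hn Ha Hb Hab.
  destruct (mono N n Hn a0 b0 Ha Hb) as [H1 H2].
  destruct (mono N n Hn b0 a0 Hb Ha) as [H3 H4].
  unfold h in *.
  destruct (Z.lt_trichotomy (fst a0) (fst b0)) as [Hl|[He|Hl]].
  - specialize (H1 Hl). split; [lia|]. apply Z.mul_pos_pos; lia.
  - exfalso; auto.
  - specialize (H3 Hl). split; [lia|]. apply Z.mul_neg_neg; lia.
Qed.

Theorem lemma4 : forall r : nat, (1 <= r)%nat -> high_above (R r) (L r).
Proof.
  intros r Hr. destruct r as [|n]; [lia|].
  assert (HL: L (S n) = P n) by reflexivity.
  assert (Hd: delta (S n) = 3*4^Z.of_nat n).
  { unfold delta; rewrite Nat2Z.inj_succ. f_equal. f_equal. lia. }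
  assert (Hd': delta' (S n) = (3*(Z.of_nat n + 1) + 1)*4^Z.of_nat n).
  { unfold delta'; rewrite Nat2Z.inj_succ. f_equal. f_equal. lia. }
  unfold high_above, R. rewrite HL, Hd, Hd'.
  pose proof (inv n n (le_n n)) as Hinv.
  assert (He: 0 < 4 ^ Z.of_nat n) by (apply Z.pow_pos_nonneg; lia).
  split.
  - intros a b q Ha Hb Hab Hq.
    apply in_map_iff in Ha. destruct Ha as [a0 [<- Ha0]].
    apply in_map_iff in Hb. destruct Hb as [b0 [<- Hb0]].
    assert (Hab0 : a0 <> b0) by (intros ->; apply Hab; reflexivity).
    destruct (slope_sign n n a0 b0 (le_n n) Ha0 Hb0 Hab0) as [Hx Hs].
    destruct (Hinv a0 Ha0) as [H1 H2]. destruct (Hinv q Hq) as [H3 H4].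
    unfold h in *.
    unfold line_above; cbn [fst snd].
    set (e := 4 ^ Z.of_nat n) in *.
    set (k := Z.of_nat n + 1) in *.
    split; [lia|].
    set (dx := fst b0 - fst a0) in *.
    set (dy := snd b0 - snd a0) in *.
    replace (fst b0 + 3 * e - (fst a0 + 3 * e)) with dx by (unfold dx; ring).
    replace (snd b0 + (3 * k + 1) * e - (snd a0 + (3 * k + 1) * e)) with dy by (unfold dy; ring).
    set (G := fst q - (fst a0 + 3 * e)).
    set (E := (k * fst q - snd q) - (k * fst a0 - snd a0) + e).
    assert (HG : G < 0) by (unfold G; lia).
    assert (HE : 0 <= E) by (unfold E; lia).
    assert (Heq : snd q - (snd a0 + (3 * k + 1) * e) = k * G - E) by (unfold G, E; ring).
    rewrite Heq.
    assert (P1 : dx * (k * dx - dy) * G < 0) by (apply Z.mul_pos_neg; lia).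
    assert (P2 : 0 <= dx * dx * E) by (apply Z.mul_nonneg_nonneg; [nia|lia]).
    assert (Hr1 : dx * (k * G - E) * dx - dy * G * dx = dx * (k * dx - dy) * G - dx * dx * E) by ring.
    lia.
  - intros a b q Ha Hb Hab Hq.
    apply in_map_iff in Hq. destruct Hq as [q0 [<- Hq0]].
    destruct (slope_sign n n a b (le_n n) Ha Hb Hab) as [Hx Hs].
    destruct (Hinv a Ha) as [H1 H2]. destruct (Hinv q0 Hq0) as [H3 H4].
    unfold h in *.
    unfold line_below; cbn [fst snd].
    set (e := 4 ^ Z.of_nat n) in *.
    set (k := Z.of_nat n + 1) in *.
    split; [lia|].
    set (dx := fst b - fst a) in *.
    set (dy := snd b - snd a) in *.
    set (G := fst q0 + 3 * e - fst a).
    set (E := (k * fst q0 - snd q0) - e - (k * fst a - snd a)).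
    assert (HG : 0 < G) by (unfold G; lia).
    assert (HE : E < 0) by (unfold E; lia).
    assert (Heq : snd q0 + (3 * k + 1) * e - snd a = k * G - E) by (unfold G, E; ring).
    rewrite Heq.
    assert (P1 : 0 < dx * (k * dx - dy) * G) by (apply Z.mul_pos_pos; lia).
    assert (P2 : dx * dx * E <= 0) by (apply Z.mul_nonneg_nonpos; [nia|lia]).
    assert (Hr1 : dx * (k * G - E) * dx - dy * G * dx = dx * (k * dx - dy) * G - dx * dx * E) by ring.
    lia.
Qed.
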